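(* Let $T=\langle a,b,c\rangle$ with $1<a<b<c$, $\gcd(a,b)=\gcd(a,c)=\gcd(b,c)=1$ and $c\notin\langle a,b\rangle$, and let $\mathrm L(l,h,w,y)$ be the (unique) L-shape related to $T$. Then $h<a$ and $l<b$.
   Context: $\langle a,b\rangle=\{xa+yb:x,y\in\mathbb N\}$ and $T=\langle a,b,c\rangle=\{xa+yb+zc:x,y,z\in\mathbb N\}$. For $(i,j)\in\mathbb N^2$ let $[\![i,j]\!]=[i,i+1)\times[j,j+1)\subset\mathbb R^2$. For integers $0\le w<l$, $0\le y<h$, the L-shape $\mathrm L(l,h,w,y)$ is the set of unit squares $[\![i,j]\!]$ with $0\le i<l$, $0\le j<h$, excluding those with $i\ge l-w$ and $j\ge h-y$ (it has $lh-wy$ squares). An L-shape $\mathcal H$ is related to $T$ if it consists of exactly $c$ squares, every residue class modulo $c$ equals $ia+jb \bmod c$ for exactly one $[\![i,j]\!]\in\mathcal H$, and for each $[\![i,j]\!]\in\mathcal H$, $ia+jb=\min\{sa+tb:(s,t)\in\mathbb N^2,\ sa+tb\equiv ia+jb \pmod c\}$. *)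

(* Defs.v *)
From mathcomp Require Import all_boot.
Set Implicit Arguments.
Unset Strict Implicit.
Unset Printing Implicit Defensive.

Definition in_sg2 (a b n : nat) : Prop := exists x y : nat, n = x * a + y * b.

Definition inL (l h w y i j : nat) : bool :=
  [&& i < l, j < h & ~~ ((l - w <= i) && (h - y <= j))].

Definition cardL (l h w y : nat) : nat :=
  \sum_(i < l) \sum_(j < h) inL l h w y i j.

Definition related (a b c l h w y : nat) : Prop :=
  [/\ cardL l h w y = c,
      (forall r, r < c -> exists i j, inL l h w y i j /\ (i * a + j * b) %% c = r),
      (forall i j i' j', inL l h w y i j -> inL l h w y i' j' ->
          i * a + j * b = i' * a + j' * b %[mod c] -> i = i' /\ j = j')
    &
      (forall i j, inL l h w y i j -> forall s t,
          s * a + t * b = i * a + j * b %[mod c] -> i * a + j * b <= s * a + t * b)].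

(* Main.v *)
Require Import Defs.
From mathcomp Require Import all_boot.
From mathcomp Require Import zify.

Lemma key (p q c : nat) : 0 < p -> 0 < q -> coprime p q ->
  ~ (exists x y : nat, c = x * p + y * q) ->
  exists s t, s * p + t * q + c = (p - 1) * q.
Proof.
move=> p0 q0 cop nS.
have [km kn E _] := egcdnP p q0.
rewrite gcdnC (eqP cop) in E.
set t := (km * c) %% p.
have tp : t < p by rewrite ltn_mod.
have Ht : t * q = c %[mod p].
  rewrite /t modnMml -mulnA [c * q]mulnC mulnA E mulnDl mul1n.
  by rewrite -mulnA [p * c]mulnC mulnA modnMDl.
clearbody t.
case: (leqP (t * q) c) => Htc.
  exfalso; apply: nS.
  have Hd : p %| c - t * q by rewrite -eqn_mod_dvd; [rewrite Ht | exact: Htc].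
  exists ((c - t * q) %/ p), t; rewrite divnK //; lia.
have Hd : p %| t * q - c.
  by rewrite -eqn_mod_dvd; [rewrite Ht | exact: ltnW].
exists ((t * q - c) %/ p), (p - 1 - t); rewrite divnK //.
have H1 : t * q <= (p - 1) * q by rewrite leq_mul2r; apply/orP; right; lia.
rewrite mulnBl.
move: H1 Htc; set X := t * q; set Y := (p - 1) * q; lia.
Qed.

Theorem lemma10 (a b c l h w y : nat) :
  1 < a -> a < b -> b < c ->
  coprime a b -> coprime a c -> coprime b c ->
  ~ in_sg2 a b c ->
  w < l -> y < h ->
  related a b c l h w y ->
  h < a /\ l < b.
Proof.
move=> a1 ab bc cab cac cbc nS wl yh [_ _ _ Hmin].
split.
  rewrite ltnNge; apply/negP => ha.
  have [s [t E]] := key a b c (ltnW a1) (ltn_trans (ltnW a1) ab) cab nS.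
  have hin : inL l h w y 0 (a - 1) by rewrite /inL; apply/and3P; split; lia.
  have := Hmin _ _ hin s t.
  rewrite mul0n add0n -E modnDr => /(_ erefl); lia.
rewrite ltnNge; apply/negP => hb.
have cba : coprime b a by rewrite coprime_sym.
have nS' : ~ (exists x y0 : nat, c = x * b + y0 * a).
  by move=> [x [y0 E]]; apply: nS; exists y0, x; lia.
have [s [t E]] := key b a c (ltn_trans (ltnW a1) ab) (ltnW a1) cba nS'.
have hin : inL l h w y (b - 1) 0 by rewrite /inL; apply/and3P; split; lia.
have := Hmin _ _ hin t s.
rewrite mul0n addn0 -E [t * a + s * b]addnC modnDr => /(_ erefl); lia.
Qed.
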